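(* Let $n$ and $t$ be positive integers and $d=2t+1$. If $t\leqslant n-\sqrt{n}-1$, $n\cdot\prod_{i=0}^{t}(n-i)\leqslant d\cdot d!$, and $d\leqslant n-1$, then $A_{new}(n,d)\leqslant A_{SP}(n,d)$.
   Context: $S_n$ is the symmetric group on $[n]$; the characteristic set of $\pi\in S_n$ is $A(\pi)=\{(\pi(i),\pi(i+1)):1\leqslant i<n\}$, and the block permutation distance is $d_B(\pi_1,\pi_2)=|A(\pi_1)\setminus A(\pi_2)|$. The $t$-block permutation ball $b_B(n,t)$ is the set of $\sigma\in S_n$ with $d_B(\sigma,\mathrm{id})\leqslant t$. The sphere-packing bound is $A_{SP}(n,2t+1)=\frac{n!}{|b_B(n,t)|}$, and the new bound is $A_{new}(n,d)=\frac{\binom{n}{d}\binom{n}{d}(n-d)!}{\binom{n-1}{n-d}}$. *)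

(* Defs.v *)
From HB Require Import structures.
From mathcomp Require Import all_boot all_order all_algebra all_fingroup.
Set Implicit Arguments. Unset Strict Implicit. Unset Printing Implicit Defensive.
Import Order.TTheory GRing.Theory Num.Theory.

(* S_n is 'S_n, permutations of 'I_n = {0,..,n-1} (a relabelling of [n]). *)

Definition charset n (p : 'S_n) : {set 'I_n * 'I_n} :=
  [set (p i, p j) | i in 'I_n, j in 'I_n & val j == (val i).+1].

Definition dB n (p1 p2 : 'S_n) : nat := #|charset p1 :\: charset p2|.

Definition ballB n t : {set 'S_n} := [set s : 'S_n | dB s 1 <= t].

Local Open Scope ring_scope.

(* sphere-packing bound A_SP(n, 2t+1) = n! / |b_B(n,t)| (indexed by t) *)
Definition A_SP (R : fieldType) (n t : nat) : R :=
  (n`!)%:R / (#|ballB n t|)%:R.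

Definition A_new (R : fieldType) (n d : nat) : R :=
  ('C(n, d) * 'C(n, d) * (n - d)`!)%:R / ('C(n.-1, n - d))%:R.

(* Main.v *)
Require Import Defs.
From HB Require Import structures.
From mathcomp Require Import all_boot all_order all_algebra all_fingroup.
From mathcomp Require Import zify ring lra.
Import Order.TTheory GRing.Theory Num.Theory.
Set Implicit Arguments. Unset Strict Implicit. Unset Printing Implicit Defensive.

Definition sf m (s : 'S_m.+1) (j : nat) : nat := val (s (inord j)).
Definition start m (s : 'S_m.+1) (i : 'I_m.+1) : bool :=
  (val i == 0) || (sf s i != (sf s i.-1).+1).
Definition Ls m (s : 'S_m.+1) : seq 'I_m.+1 :=
  [seq s i | i <- enum 'I_m.+1 & start s i].

Lemma vinord m k : k <= m -> \val (inord k : 'I_m.+1) = k.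
Proof. exact: inordK. Qed.

Lemma sf_lt m (s : 'S_m.+1) j : sf s j <= m.
Proof. by rewrite /sf -ltnS ltn_ord. Qed.

Lemma sf_inj m (s : 'S_m.+1) j k : j <= m -> k <= m -> sf s j = sf s k -> j = k.
Proof.
move=> hj hk /val_inj /perm_inj /(congr1 (@nat_of_ord _)); rewrite !inordK //.
Qed.

Lemma sf_val m (s : 'S_m.+1) (x : 'I_m.+1) : sf s x = val (s x).
Proof. by rewrite /sf inord_val. Qed.

Lemma mem_Ls m (s : 'S_m.+1) v :
  (v \in map val (Ls s)) = [exists x, start s x && (val (s x) == v)].
Proof.
apply/mapP/existsP => [[y] | [x /andP[h1 /eqP h2]]].
  rewrite /Ls => /mapP [x]; rewrite mem_filter => /andP[hx _] -> ->.
  by exists x; rewrite hx eqxx.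
by exists (s x) => //; apply/mapP; exists x => //; rewrite mem_filter h1 mem_enum.
Qed.

Lemma char_start m (s : 'S_m.+1) i : i < m ->
  (sf s i.+1 == (sf s i).+1) =
  ((sf s i).+1 <= m) && ((sf s i).+1 \notin map val (Ls s)).
Proof.
move=> him; apply/idP/idP.
  move/eqP=> h; rewrite -h sf_lt /=; rewrite mem_Ls; apply/existsP => -[x /andP[hx /eqP hv]].
  have := hv; rewrite -sf_val => /(@sf_inj m s x i.+1 (ltn_ord x) him) => hxe.
  by move: hx; rewrite /start hxe /= h /= eqxx orbF hxe.
move=> /andP[hv hn].
set j := (s^-1 (inord (sf s i).+1))%g.
have sj : s j = inord (sf s i).+1 by rewrite /j permKV.
have hst : ~~ start s j.
  apply/negP=> hj; move: hn; rewrite mem_Ls; case/existsP; exists j.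
  by rewrite hj sj vinord // eqxx.
move: hst; rewrite /start negb_or negbK => /andP[hj0 /eqP hj].
have hjv : sf s j = (sf s i).+1 by rewrite sf_val sj vinord.
have : sf s j.-1 = sf s i by move: hj; rewrite hjv => -[].
move/(sf_inj _ (ltnW him)) => e.
have hj1 : (val j).-1 <= m by have := ltn_ord j; rewrite ltnS => h; exact: leq_trans (leq_pred _) h.
have := e hj1 => {}e.
have -> : i.+1 = val j by rewrite -e prednK // lt0n.
by rewrite hjv.
Qed.

Lemma Ls_nth m (s : 'S_m.+1) p : p <= m -> start s (inord p) ->
  sf s p = \val (nth ord0 (Ls s) (count (start s) (take p (enum 'I_m.+1)))).
Proof.
move=> hpm hst.
set E := enum 'I_m.+1.
have hp : p < size E by rewrite size_enum_ord.
have hnth : nth ord0 E p = inord p.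
  by apply: ord_inj; rewrite nth_enum_ord // inordK.
have eq : E = take p E ++ inord p :: drop p.+1 E.
  by rewrite -hnth -drop_nth // cat_take_drop.
rewrite /Ls -/E {1}eq filter_cat /= hst map_cat /= nth_cat size_map size_filter ltnn subnn /=.
by [].
Qed.

Lemma mem_take_ord m (x : 'I_m.+1) p : x \in take p (enum 'I_m.+1) -> nat_of_ord x < p.
Proof.
rewrite -(mem_map val_inj) map_take val_enum_ord take_iota mem_iota => /andP[_ h].
by move: h; rewrite leq_min => /andP[].
Qed.

Lemma Ls_inj m (s1 s2 : 'S_m.+1) : Ls s1 = Ls s2 -> s1 = s2.
Proof.
move=> hL.
have key : forall p, p <= m -> sf s1 p = sf s2 p.
  elim/ltn_ind => p IH hp.
  have hc : count (start s1) (take p (enum 'I_m.+1)) = count (start s2) (take p (enum 'I_m.+1)).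
    apply: eq_in_count => x /mem_take_ord hx.
    have e1 : sf s1 x = sf s2 x by apply: IH => //; lia.
    have e2 : sf s1 (nat_of_ord x).-1 = sf s2 (nat_of_ord x).-1 by apply: IH => //; lia.
    by rewrite /start e1 e2.
  case: p IH hp hc => [|i] IH hp hc.
    have h1 : start s1 (inord 0) by rewrite /start vinord.
    have h2 : start s2 (inord 0) by rewrite /start vinord.
    by rewrite (Ls_nth hp h1) (Ls_nth hp h2) hc hL.
  have hs : start s1 (inord i.+1) = start s2 (inord i.+1).
    rewrite /start ?vinord ?inordK //= !char_start // (IH i) //; last by lia. by have -> : Ls s1 = Ls s2 := hL.
  case hst: (start s1 (inord i.+1)).
    have hst2 : start s2 (inord i.+1) by rewrite -hs.
    by rewrite (Ls_nth hp hst) (Ls_nth hp hst2) hc hL.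
  have hst2 : start s2 (inord i.+1) = false by rewrite -hs.
  move: hst hst2; rewrite /start ?vinord ?inordK //= => /negbFE/eqP -> /negbFE/eqP ->.
  by rewrite (IH i) // ltnW.
apply/permP => x; apply: val_inj; rewrite -!sf_val key //.
by rewrite -ltnS.
Qed.

Lemma Ls_uniq m (s : 'S_m.+1) : uniq (Ls s).
Proof.
rewrite /Ls map_inj_uniq; [exact/filter_uniq/enum_uniq | exact: perm_inj].
Qed.

Lemma ord0_Ls m (s : 'S_m.+1) : ord0 \in Ls s.
Proof.
apply/mapP; exists (s^-1 ord0)%g; last by rewrite permKV.
rewrite mem_filter mem_enum andbT /start; case: eqP => //= _.
by rewrite sf_val permKV.
Qed.

Lemma size_Ls_card m (s : 'S_m.+1) : size (Ls s) = #|[set x | start s x]|.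
Proof.
rewrite /Ls size_map size_filter cardE enumT /enum_mem -size_filter.
congr size. apply: eq_filter => x. symmetry; exact: (in_set (start s) x).
Qed.

Lemma size_Ls m (s : 'S_m.+1) : size (Ls s) <= (dB s 1).+1.
Proof.
rewrite size_Ls_card (cardsD1 ord0) -[(dB s 1).+1]add1n leq_add ?leq_b1 //.
set S := _ :\ _.
pose f (x : 'I_m.+1) := (s (inord x.-1), s x).
have finj : {in S &, injective f}.
  by move=> x y _ _ [_ /perm_inj].
rewrite -(card_in_imset finj) /dB; apply: subset_leq_card.
apply/subsetP => _ /imsetP [x hx ->].
move: hx; rewrite !inE => /andP[hx0 hst].
have hx0' : nat_of_ord x != 0 by apply: contra hx0 => h; apply/eqP/ord_inj; rewrite (eqP h).
have hxm : (nat_of_ord x).-1 <= m by have := ltn_ord x; rewrite ltnS => h; exact: leq_trans (leq_pred _) h.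
apply/andP; split.
  apply/negP => /imset2P [i j _ hj]; rewrite /f !perm1 => -[e1 e2].
  move: hj; rewrite !inE /= => hj.
  move: hst; rewrite /start (negbTE hx0') /= sf_val e2 /sf e1.
  by move/negP; apply; exact: hj.
apply/imset2P; exists (inord x.-1) x => //.
by rewrite !inE /= inordK // prednK // lt0n.
Qed.

Lemma rem_index_inj (T : eqType) (x : T) s1 s2 : x \in s1 -> x \in s2 ->
  index x s1 = index x s2 -> rem x s1 = rem x s2 -> s1 = s2.
Proof.
elim: s1 s2 => [//|a s1 IH] [//|b s2] /=.
rewrite !inE; case: (eqVneq a x) => [->|hax]; case: (eqVneq b x) => [->|hbx] //=.
- by move=> _ _ _ ->.
move=> h1 h2 [hi] [hab hr].
by rewrite hab (IH s2).
Qed.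

Lemma card_level m k : #|[set s : 'S_m.+1 | size (Ls s) == k.+1]| <= k.+1 * m ^_ k.
Proof.
set A := [set s : 'S_m.+1 | _].
pose enc (s : 'S_m.+1) := (inord (index ord0 (Ls s)) : 'I_k.+1,
   ([ffun i : 'I_k => nth ord0 (rem ord0 (Ls s)) i] : {ffun 'I_k -> 'I_m.+1})).
set F := [set f : {ffun 'I_k -> 'I_m.+1} in ffun_on [set~ ord0] | injectiveb f].
have cT : #|setX [set: 'I_k.+1] F| = k.+1 * m ^_ k.
  by rewrite cardsX cardsT card_ord card_inj_ffuns_on cardsC1 !card_ord.
have sz : forall s, s \in A -> size (rem ord0 (Ls s)) = k.
  by move=> s; rewrite inE => /eqP hs; rewrite size_rem ?ord0_Ls // hs.
have ix : forall s, s \in A -> index ord0 (Ls s) < k.+1.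
  by move=> s hs; move: (hs); rewrite inE => /eqP <-; rewrite index_mem ord0_Ls.
have einj : {in A &, injective enc}.
  move=> s1 s2 h1 h2 [e1 e2]; apply: Ls_inj.
  apply: (rem_index_inj (x := ord0)); rewrite ?ord0_Ls //.
    by move: e1 => /(congr1 (@nat_of_ord _)); rewrite !inordK // ix.
  apply: (@eq_from_nth _ ord0); first by rewrite !sz.
  move=> i; rewrite sz // => hi.
  by have := congr1 (fun g : {ffun 'I_k -> 'I_m.+1} => g (Ordinal hi)) e2; rewrite !ffunE.
rewrite -cT -(card_in_imset einj); apply: subset_leq_card.
apply/subsetP => _ /imsetP [s hs ->].
rewrite !inE /=; apply/andP; split.
  apply/ffun_onP => i; rewrite ffunE !inE.
  have hi : (nat_of_ord i) < size (rem ord0 (Ls s)) by rewrite sz.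
  have := mem_nth ord0 hi; rewrite (mem_rem_uniq _ (Ls_uniq s)) !inE.
  by case/andP.
apply/injectiveP => i j; rewrite !ffunE => e; apply: ord_inj.
apply/eqP; rewrite -(nth_uniq ord0 (s := rem ord0 (Ls s))) ?sz ?rem_uniq ?Ls_uniq //.
by rewrite e.
Qed.

Lemma ball_bound m t : #|ballB m.+1 t| <= \sum_(k < t.+1) k.+1 * m ^_ k.
Proof.
have H : forall t, #|[set s : 'S_m.+1 | size (Ls s) <= t.+1]| <=
           \sum_(k < t.+1) #|[set s : 'S_m.+1 | size (Ls s) == k.+1]|.
  elim=> [|t' IH].
    rewrite big_ord1; apply: subset_leq_card.
    apply/subsetP => s; rewrite !inE eqn_leq => ->.
    by have := ord0_Ls s; case: (Ls s).
  rewrite big_ord_recr /=.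
  apply: leq_trans (leq_add IH (leqnn _)).
  apply: leq_trans (leq_card_setU _ _); apply: subset_leq_card.
  apply/subsetP => s; rewrite !inE leq_eqVlt ltnS orbC.
  by case/orP => ->; rewrite ?orbT.
apply: leq_trans (leq_trans _ (H t)) _.
  apply: subset_leq_card; apply/subsetP => s; rewrite !inE => hs.
  exact: leq_trans (size_Ls s) _.
by apply: leq_sum => k _; apply: card_level.
Qed.

Lemma sum_bound m t : t <= m -> m.+1 <= (m - t) * (m - t) ->
  \sum_(k < t.+1) k.+1 * m ^_ k <= m.+1 ^_ t.+1.
Proof.
move=> htm hsq.
suff: forall j, j <= t -> \sum_(k < j.+1) k.+1 * m ^_ k <= m.+1 ^_ j.+1 by apply.
elim=> [|j IH] hj.
  by rewrite big_ord1 /= ffactn0 ffactn1 muln1.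
rewrite big_ord_recr /=.
apply: leq_trans (leq_add (IH (ltnW hj)) (leqnn _)) _.
rewrite !(ffactnS m.+1) /= ffactnSr.
set P := m ^_ j.
have c : m.+1 + j.+2 * (m - j) <= m.+1 * (m - j) by nia.
have := leq_mul2r P (m.+1 + j.+2 * (m - j)) (m.+1 * (m - j)); rewrite c orbT => h.
nia.
Qed.

Lemma nat_main m t : t.*2.+1 <= m ->
  m.+1 <= (m - t) * (m - t) ->
  (m.+1 * \prod_(i < t.+1) (m.+1 - i) <= t.*2.+1 * (t.*2.+1)`!)%N ->
  'C(m.+1, t.*2.+1) * 'C(m.+1, t.*2.+1) * (m.+1 - t.*2.+1)`! * #|ballB m.+1 t|
   <= (m.+1)`! * 'C(m, m.+1 - t.*2.+1).
Proof.
move=> hd hsq hp.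
have hB : m.+1 * #|ballB m.+1 t| <= t.*2.+1 * (t.*2.+1)`!.
  apply: leq_trans hp; rewrite leq_mul2l /= -ffact_prod.
  apply: leq_trans (ball_bound m t) (sum_bound _ _) => //.
  by move: hd; rewrite -addnn; lia.
set d := t.*2.+1.
have e1 : 'C(m, m.+1 - d) = 'C(m, t.*2).
  by rewrite subSS bin_sub // ltnW.
have e2 : m.+1 * 'C(m, t.*2) = d * 'C(m.+1, d) by rewrite (mul_bin_diag m.+1).
have e3 : 'C(m.+1, d) * (d`! * (m.+1 - d)`!) = (m.+1)`! by rewrite bin_fact // ltnW.
rewrite e1 -e3.
set C := 'C(m.+1, d). set Q := (m.+1 - d)`!. set F := d`!. set B := #|_|.
set C2 := 'C(m, t.*2).
rewrite -(leq_pmul2l (ltn0Sn m)).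
have -> : m.+1 * (C * C * Q * B) = C * C * Q * (m.+1 * B).
  nia.
have -> : m.+1 * (C * (F * Q) * C2) = C * C * Q * F * d.
  by rewrite mulnCA e2; nia.
by rewrite -[C * C * Q * F * d]mulnA leq_mul // [F * d]mulnC.
Qed.

Local Open Scope ring_scope.

Theorem mainTheorem8 (R : rcfType) (n t : nat) :
  (0 < n)%N -> (0 < t)%N ->
  (t%:R : R) <= n%:R - Num.sqrt (n%:R) - 1 ->
  (n * \prod_(i < t.+1) (n - i) <= t.*2.+1 * (t.*2.+1)`!)%N ->
  (t.*2.+1 <= n.-1)%N ->
  A_new R n t.*2.+1 <= A_SP R n t.
Proof.
case: n => [//|m] _ _ hsq hp /= hd.
have htm : (t <= m)%N by move: hd; rewrite -addnn; lia.
have hsqn : (m.+1 <= (m - t) * (m - t))%N.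
  have h1 : Num.sqrt (m.+1%:R : R) <= (m - t)%:R.
    rewrite natrB // -addn1 natrD. move: hsq; rewrite -addn1 natrD. lra.
  have h0 : 0 <= Num.sqrt (m.+1%:R : R) := sqrtr_ge0 _.
  rewrite -(ler_nat R) natrM -(sqr_sqrtr (ler0n R m.+1)) expr2.
  by apply: ler_pM.
have hB : (0 < #|ballB m.+1 t|)%N.
  by apply/card_gt0P; exists 1%g; rewrite inE /dB setDv cards0.
have hC : (0 < 'C(m, m.+1 - t.*2.+1))%N by rewrite bin_gt0; lia.
rewrite /A_new /A_SP /=.
rewrite ler_pdivlMr ?ltr0n // mulrAC ler_pdivrMr ?ltr0n // -!natrM ler_nat.
exact: nat_main.
Qed.
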